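(* Let $A \in \mathbb{R}^{m \times n}$ and $b \in \mathbb{R}^m$ be such that $\mathcal{P} = \{x \in \mathbb{R}^n : Ax \geq b\}$ is a polytope. Then the vertex-edge graph $G_\mathrm{vert}$ of $\mathcal{P}$ is the image of the lex-graph $G_\mathrm{lex}$ by the map $\phi : I \mapsto \pi(X^I)$, where $\pi$ sends a matrix in $\mathbb{R}^{n \times (1+m)}$ to its first column.
   Context: Let $\tilde b := [\,b \;\; -\mathrm{Id}_m\,] \in \mathbb{R}^{m \times (1+m)}$. For row vectors $\alpha,\beta \in \mathbb{R}^{1+m}$, $\alpha \leq_{\mathrm{lex}} \beta$ means $\alpha = \beta$ or $\alpha_k < \beta_k$ at the first index $k$ where they differ; for matrices with $1+m$ columns, $X \geq_{\mathrm{lex}} Y$ means $X_i \geq_{\mathrm{lex}} Y_i$ for every row $i$. For $I \subset [m]$, $A_I$, $\tilde b_I$ are the submatrices of rows indexed by $I$. A lex-feasible basis is a set $I \subset [m]$ with $\#I = n$, $A_I$ nonsingular, and $X^I := A_I^{-1}\tilde b_I$ satisfying $A X^I \geq_{\mathrm{lex}} \tilde b$. The lex-graph $G_\mathrm{lex}$ has the lex-feasible bases as vertices, with an edge between $I$ and $I'$ iff $\#(I \cap I') = n-1$. A face of $\mathcal{P}$ is a nonempty set of minimizers over $\mathcal{P}$ of some linear function $x \mapsto \langle c, x\rangle$; vertices and edges are faces of dimension 0 and 1; two vertices $v,w$ are adjacent if the segment $[v,w]$ is an edge. $G_\mathrm{vert}$ is the graph on the vertices of $\mathcal{P}$ with this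 adjacency. The image of a graph $(V,E)$ by $f$ is the graph with vertex set $f(V)$ and edges $\{(f(v),f(w)) : (v,w) \in E,\ f(v) \neq f(w)\}$. *)

(* Defs.v *)
From HB Require Import structures.
From mathcomp Require Import all_boot all_order all_algebra.
Set Implicit Arguments. Unset Strict Implicit. Unset Printing Implicit Defensive.
Import Order.TTheory GRing.Theory Num.Theory.
Local Open Scope ring_scope.

Section Defs.
Variables (R : realFieldType) (m n : nat).
Variables (A : 'M[R]_(m, n)) (b : 'cV[R]_m).

Definition inP (x : 'cV[R]_n) : Prop := forall i : 'I_m, b i 0 <= (A *m x) i 0.

Definition polytope : Prop :=
  exists M : R, forall x, inP x -> forall j : 'I_n, `|x j 0| <= M.

Definition btilde : 'M[R]_(m, m.+1) := row_mx b (- 1%:M).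

Definition lex_le (k : nat) (u v : 'rV[R]_k) : Prop :=
  u = v \/ exists j : 'I_k,
    (forall j' : 'I_k, (j' < j)%N -> u 0 j' = v 0 j') /\ u 0 j < v 0 j.

(* Rows of A (resp. btilde) indexed by I, taken in increasing order of index;
   when #|I| = n these are exactly the submatrices A_I and btilde_I. *)
Definition AI (I : {set 'I_m}) : 'M[R]_n :=
  \matrix_(i < n, j < n) nth 0 [seq A k j | k <- enum I] i.
Definition btI (I : {set 'I_m}) : 'M[R]_(n, m.+1) :=
  \matrix_(i < n, j < m.+1) nth 0 [seq btilde k j | k <- enum I] i.

Definition XI (I : {set 'I_m}) : 'M[R]_(n, m.+1) := invmx (AI I) *m btI I.

Definition lex_feasible (I : {set 'I_m}) : Prop :=
  #|I| = n /\ AI I \in unitmx /\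
  forall i : 'I_m, lex_le (row i btilde) (row i (A *m XI I)).

Definition lex_edge (I I' : {set 'I_m}) : Prop :=
  lex_feasible I /\ lex_feasible I' /\ #|I :&: I'| = n.-1.

Definition phi (I : {set 'I_m}) : 'cV[R]_n := col ord0 (XI I).

Definition minimizer (c x : 'cV[R]_n) : Prop :=
  inP x /\ forall y, inP y -> (c^T *m x) 0 0 <= (c^T *m y) 0 0.

Definition is_face (F : 'cV[R]_n -> Prop) : Prop :=
  (exists x, F x) /\ exists c : 'cV[R]_n, forall x, F x <-> minimizer c x.

Definition segment (v w : 'cV[R]_n) : 'cV[R]_n -> Prop :=
  fun x => exists t : R, 0 <= t /\ t <= 1 /\ x = (1 - t) *: v + t *: w.

Definition is_vertex (v : 'cV[R]_n) : Prop := is_face (fun x => x = v).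

Definition vert_adj (v w : 'cV[R]_n) : Prop :=
  is_vertex v /\ is_vertex w /\ v <> w /\ is_face (segment v w).

End Defs.

(* Main.v *)
Require Import Defs.
From HB Require Import structures.
From mathcomp Require Import all_boot all_order all_algebra.
From Stdlib Require Import Classical_Prop.
From mathcomp Require Import zify ring lra.
Set Implicit Arguments. Unset Strict Implicit. Unset Printing Implicit Defensive.
Import Order.TTheory GRing.Theory Num.Theory.
Local Open Scope ring_scope.


Section Lex.
Variable R : realFieldType.
Variable k : nat.
Implicit Types u v w : 'rV[R]_k.

Definition lexpos u := exists j : 'I_k, (forall j' : 'I_k, (j' < j)%N -> u 0 j' = 0) /\ 0 < u 0 j.
Definition lexnn u := u = 0 \/ lexpos u.

Lemma lex_leE u v : lex_le u v <-> lexnn (v - u).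
Proof.
split.
- case=> [->|[j [H1 H2]]]; first by left; rewrite subrr.
  right; exists j; split; first by move=> j' /H1; rewrite !mxE => ->; rewrite subrr.
  by rewrite !mxE subr_gt0.
- case=> [/eqP|[j [H1 H2]]]; first by rewrite subr_eq0 => /eqP ->; left.
  right; exists j; split; first by move=> j' /H1 /eqP; rewrite !mxE subr_eq0 => /eqP.
  by move: H2; rewrite !mxE subr_gt0.
Qed.

Lemma lexposD u v : lexpos u -> lexpos v -> lexpos (u + v).
Proof.
move=> [j1 [H1 P1]] [j2 [H2 P2]].
case: (ltngtP j1 j2) => [lt|lt|/val_inj eq].
- exists j1; split; first by move=> j' Hj; rewrite mxE H1 ?H2 ?addr0 //; apply: ltn_trans lt.
  by rewrite mxE (H2 _ lt) addr0.
- exists j2; split; first by move=> j' Hj; rewrite mxE H1 ?H2 ?addr0 //; apply: ltn_trans lt.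
  by rewrite mxE (H1 _ lt) add0r.
- subst; exists j2; split; first by move=> j' Hj; rewrite mxE H1 ?H2 ?addr0.
  by rewrite mxE addr_gt0.
Qed.

Lemma lexnnD u v : lexnn u -> lexnn v -> lexnn (u + v).
Proof.
case=> [->|Hu]; first by rewrite add0r.
case=> [->|Hv]; first by rewrite addr0; right.
by right; apply: lexposD.
Qed.

Lemma lexnnZ (a : R) u : 0 <= a -> lexnn u -> lexnn (a *: u).
Proof.
rewrite le_eqVlt => /orP[/eqP<-|ha]; first by rewrite scale0r; left.
case=> [->|[j [H1 H2]]]; first by rewrite scaler0; left.
right; exists j; split; first by move=> j' /H1; rewrite mxE => ->; rewrite mulr0.
by rewrite mxE mulr_gt0.
Qed.

Lemma lexnn0 : lexnn 0. Proof. by left. Qed.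

Lemma lexnn_total u : lexnn u \/ lexnn (- u).
Proof.
case: (boolP [exists j, u 0 j != 0]) => [/existsP[j0 Hj0]|H]; last first.
  left; left; apply/rowP => j; rewrite mxE; apply/eqP; apply: contraNT H => Hj.
  by apply/existsP; exists j.
case: (@arg_minnP _ j0 (fun j : 'I_k => u 0 j != 0) (fun j : 'I_k => (j : nat)) Hj0) => j Hj Hmin.
have H1 : forall j' : 'I_k, (j' < j)%N -> u 0 j' = 0.
  move=> j' lt; apply/eqP; apply: contraTT lt => Hj'; rewrite -leqNgt; exact: Hmin.
case: (ltgtP (u 0 j) 0) => [neg|pos|/eqP]; last by rewrite (negbTE Hj).
- right; right; exists j; split; first by move=> j' /H1; rewrite mxE => ->; rewrite oppr0.
  by rewrite mxE oppr_gt0.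
- by left; right; exists j.
Qed.

Lemma lexpos_anti u : lexpos u -> lexpos (- u) -> False.
Proof.
move=> [j1 [H1 P1]] [j2 [H2 P2]].
case: (ltngtP j1 j2) => [lt|lt|/val_inj eq].
- by move: (H2 _ lt); rewrite mxE => /eqP; rewrite oppr_eq0 => /eqP E; rewrite E ltxx in P1.
- by move: (H1 _ lt) P2; rewrite mxE => ->; rewrite oppr0 ltxx.
- by subst; move: P2; rewrite mxE oppr_gt0 => P2; move: (lt_trans P1 P2); rewrite ltxx.
Qed.

Lemma lexnn_anti u : lexnn u -> lexnn (- u) -> u = 0.
Proof.
case=> [//|Hu]; case=> [/eqP|Hv]; first by rewrite oppr_eq0 => /eqP.
by case: (lexpos_anti Hu Hv).
Qed.

Lemma lexnn_trans u v w : lexnn (v - u) -> lexnn (w - v) -> lexnn (w - u).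
Proof.
move=> H1 H2; have := lexnnD H2 H1.
by rewrite addrA subrK.
Qed.

Lemma lexnn_min (I : eqType) (s : seq I) (f : I -> 'rV[R]_k) (x : I) : x \in s ->
  exists2 i, i \in s & forall i', i' \in s -> lexnn (f i' - f i).
Proof.
elim: s x => [//|y s IH] x _.
case: (boolP (s == [::])) => [/eqP->|ns].
  exists y; first by rewrite inE eqxx.
  by move=> i'; rewrite inE => /eqP->; rewrite subrr; left.
have [z zs] : exists z, z \in s by case: s ns {IH} => [//|z s _]; exists z; rewrite inE eqxx.
case: (IH _ zs) => i ins Hi.
case: (lexnn_total (f i - f y)) => H.
- exists y; first by rewrite inE eqxx.
  move=> i'; rewrite inE => /orP[/eqP->|/Hi Hi']; first by rewrite subrr; left.
  exact: lexnn_trans H Hi'.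
- exists i; first by rewrite inE ins orbT.
  move=> i'; rewrite inE => /orP[/eqP->|/Hi //]; by rewrite -opprB.
Qed.

End Lex.

Lemma lexnn_first (R : realFieldType) k (u : 'rV[R]_k.+1) : lexnn u -> 0 <= u 0 ord0.
Proof.
case=> [->|[j [H1 H2]]]; first by rewrite mxE.
case: (posnP j) => [j0|jp]; last by rewrite H1.
have -> : (ord0 : 'I_k.+1) = j by apply: val_inj; rewrite /= j0.
by apply: ltW.
Qed.



Section Poly.
Variables (R : realFieldType) (m n : nat) (A : 'M[R]_(m, n)) (b : 'cV[R]_m).

Definition slack (Y : 'M[R]_(n, m.+1)) (i : 'I_m) : 'rV[R]_(m.+1) :=
  row i (A *m Y) - row i (btilde b).
Definition feas Y := forall i, lexnn (slack Y i).
Definition tight Y (K : {set 'I_m}) := forall k, k \in K -> slack Y k = 0.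
Definition rowsK (K : {set 'I_m}) : 'M[R]_(m, n) := diag_mx (\row_(i < m) ((i \in K)%:R : R)) *m A.

Lemma row_rowsK K j : row j (rowsK K) = (j \in K)%:R *: row j A.
Proof. by apply/rowP => l; rewrite /rowsK mul_diag_mx !mxE. Qed.

Lemma rowsK_mulE K (d : 'cV[R]_n) i : (rowsK K *m d) i 0 = (i \in K)%:R * (A *m d) i 0.
Proof. by rewrite -mulmxA /rowsK mul_diag_mx !mxE. Qed.

Lemma rowsK_ker K (d : 'cV[R]_n) : rowsK K *m d = 0 <-> forall k, k \in K -> (A *m d) k 0 = 0.
Proof.
split.
- move=> H k kK; have := congr1 (fun M : 'cV[R]_m => M k 0) H; rewrite /= rowsK_mulE kK mul1r => ->; by rewrite mxE.
- move=> H; apply/matrixP => i j; rewrite (ord1 j) rowsK_mulE [RHS]mxE.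
  by case: (boolP (i \in K)) => [/H ->|_]; rewrite ?mulr0 ?mul0r.
Qed.

Lemma slack_upd Y (d : 'cV[R]_n) (t : 'rV[R]_(m.+1)) i :
  slack (Y + d *m t) i = slack Y i + (A *m d) i 0 *: t.
Proof.
rewrite /slack mulmxDr mulmxA.
have -> : row i (A *m Y + A *m d *m t) = row i (A *m Y) + row i (A *m d *m t).
  by apply/rowP => j; rewrite !mxE.
rewrite addrAC; congr (_ + _).
apply/rowP => j; rewrite row_mul !mxE big_ord1 [row _ _ _ _]mxE mxE; by rewrite !(ord1 (0 : 'I_1)).
Qed.

Lemma btilde0 i : btilde b i ord0 = b i 0.
Proof.
rewrite /btilde mxE; case: splitP => [j' Hj|k /= Hk]; last by [].
by rewrite (ord1 j').
Qed.

Lemma slack0 Y i : slack Y i 0 ord0 = (A *m col ord0 Y) i 0 - b i 0.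
Proof.
rewrite /slack mxE [X in _ + X]mxE [X in - X]mxE btilde0; congr (_ - _).
by rewrite !mxE; apply: eq_bigr => k _; rewrite !mxE.
Qed.

Lemma slackY0E (y0 : 'cV[R]_n) i :
  slack (row_mx y0 0) i = row_mx (row i (A *m y0) - row i b) (row i (1%:M : 'M[R]_m)).
Proof.
apply/rowP => j; rewrite /slack /btilde !mxE.
case: splitP => [j1 Hj1|k Hk]; rewrite !mxE.
  congr (_ - _); apply: eq_bigr => l _; rewrite mxE; case: splitP => [j2 Hj2|k2 Hk2].
    by rewrite (ord1 j1) (ord1 j2).
  by move: (ltn_ord j1); rewrite -Hj1 Hk2.
rewrite big1 ?sub0r ?opprK //.
move=> l _; rewrite mxE; case: splitP => [j2 Hj2|k2 Hk2]; last by rewrite mxE mulr0.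
by move: (ltn_ord j2); rewrite -Hj2 Hk.
Qed.

Lemma feas_Y0 (y0 : 'cV[R]_n) : inP A b y0 -> feas (row_mx y0 0).
Proof.
move=> Hy i; rewrite slackY0E; move: (Hy i); rewrite le_eqVlt => /orP[/eqP E|lt].
- right; exists (rshift 1 i); split.
  + move=> j' /= Hj'; rewrite mxE; case: splitP => [j1 _|k /= Hk].
    * have E' : b i ord0 = (A *m y0) i ord0 by exact: E.
      by rewrite (ord1 j1) !mxE E' mxE subrr.
    * rewrite !mxE; have /negbTE -> : i != k.
        by apply/eqP => ik; move: Hj'; rewrite Hk ik ltnn.
      by [].
  + rewrite mxE; case: splitP => [j1 /= Hj1|k /= Hk]; first by move: (ltn_ord j1); rewrite -Hj1.
    have -> : k = i by apply: val_inj; move: Hk => [].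
    by rewrite !mxE eqxx ltr01.
- right; exists ord0; split; first by [].
  rewrite mxE; case: splitP => [j1 _|k /= Hk]; last by [].
  have lt' : b i ord0 < (A *m y0) i ord0 by exact: lt.
  by rewrite (ord1 j1) mxE [X in X + _]mxE [X in _ + X]mxE [X in - X]mxE subr_gt0.
Qed.

Lemma col_Y0 (y0 : 'cV[R]_n) : col ord0 (row_mx y0 (0 : 'M_(n, m))) = y0.
Proof.
apply/matrixP => a c; rewrite !mxE; case: splitP => [j1 _|k /= Hk]; first by rewrite (ord1 c) (ord1 j1).
by [].
Qed.


Lemma rank_ext K i (d : 'cV[R]_n) : rowsK K *m d = 0 -> (A *m d) i 0 != 0 -> i \notin K ->
  \rank (rowsK K) = #|K| -> \rank (rowsK (i |: K)) = #|i |: K|.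
Proof.
move=> Hd Hi iK Hr.
have sub1 : (rowsK K <= rowsK (i |: K))%MS.
  apply/row_subP => j; rewrite row_rowsK; case: (boolP (j \in K)) => jK; last by rewrite scale0r sub0mx.
  have -> : 1%:R *: row j A = row j (rowsK (i |: K)) by rewrite row_rowsK in_setU1 jK orbT.
  exact: row_sub.
have nsub : ~~ (rowsK (i |: K) <= rowsK K)%MS.
  apply/negP => H.
  have : (row i A <= rowsK K)%MS.
    apply: submx_trans H.
    have -> : row i A = row i (rowsK (i |: K)) by rewrite row_rowsK setU11 scale1r.
    exact: row_sub.
  case/submxP => D HD.
  have : row i A *m d = 0 by rewrite HD -mulmxA Hd mulmx0.
  move/(congr1 (fun M : 'M[R]_1 => M 0 0)); rewrite -row_mul mxE [RHS]mxE => E.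
  by move: Hi; rewrite E eqxx.
have lt : (\rank (rowsK K) < \rank (rowsK (i |: K)))%N.
  by apply: rank_ltmx; rewrite ltmxE sub1 nsub.
have le : (\rank (rowsK (i |: K)) <= \rank (rowsK K) + 1)%N.
  have S : (rowsK (i |: K) <= rowsK K + row i A)%MS.
    apply/row_subP => j; rewrite row_rowsK in_setU1.
    case: (boolP (j == i)) => [/eqP->|ji] /=.
      by rewrite scale1r addsmxSr.
    case: (boolP (j \in K)) => jK; last by rewrite scale0r sub0mx.
    have -> : 1%:R *: row j A = row j (rowsK K) by rewrite row_rowsK jK.
    exact: submx_trans (row_sub _ _) (addsmxSl _ _).
  apply: leq_trans (mxrankS S) _.
  apply: leq_trans (mxrank_adds_leqif _ _).1 _.
  by rewrite leq_add2l rank_leq_row.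
rewrite cardsU1 iK add1n; move: lt le; rewrite Hr addn1 => lt le; by apply/eqP; rewrite eqn_leq le lt.
Qed.

Lemma extend Y K (d : 'cV[R]_n) (i0 : 'I_m) :
  feas Y -> tight Y K -> \rank (rowsK K) = #|K| -> rowsK K *m d = 0 -> (A *m d) i0 0 < 0 ->
  exists i (t : 'rV[R]_(m.+1)),
   [/\ (A *m d) i 0 < 0, i \notin K, lexnn t,
       feas (Y + d *m t) &
      [/\ tight (Y + d *m t) (i |: K), \rank (rowsK (i |: K)) = #|i |: K| &
       forall i', (A *m d) i' 0 < 0 -> lexnn ((- (A *m d) i' 0)^-1 *: slack Y i' - t)]].
Proof.
move=> HY HK Hr Hd Hi0.
pose a i := (A *m d) i 0.
pose r i := (- a i)^-1 *: slack Y i.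
have mem0 : i0 \in [seq i <- enum 'I_m | a i < 0] by rewrite mem_filter mem_enum andbT.
have [i Hi Hmin] := @lexnn_min _ _ _ [seq i <- enum 'I_m | a i < 0] r i0 mem0.
move: Hi; rewrite mem_filter mem_enum andbT => Hi.
have Hmin' : forall i', a i' < 0 -> lexnn (r i' - r i).
  by move=> i' Hi'; apply: Hmin; rewrite mem_filter mem_enum andbT.
have iK : i \notin K.
  apply/negP => iK; have := (proj1 (rowsK_ker K d) Hd i iK).
  by move=> E; move: Hi; rewrite /a E ltxx.
have Hna : forall i', a i' < 0 -> slack Y i' + a i' *: r i = (- a i') *: (r i' - r i).
  by move=> i' Hi'; rewrite scalerBr /r [in RHS]scalerA divff ?oppr_eq0 ?lt_eqF // scale1r scaleNr opprK //.
exists i; exists (r i); split => //; last split => //.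
- by apply: lexnnZ; [rewrite invr_ge0 oppr_ge0 ltW | apply: HY].
- move=> i'; rewrite slack_upd; case: (ltP (a i') 0) => Ha.
    by rewrite Hna //; apply: lexnnZ; [rewrite oppr_ge0 ltW | apply: Hmin'].
  apply: lexnnD; first exact: HY.
  by apply: lexnnZ => //; apply: lexnnZ; [rewrite invr_ge0 oppr_ge0 ltW | apply: HY].
- move=> k; rewrite in_setU1 => /orP[/eqP->|kK].
    by rewrite slack_upd /r scalerA invrN mulrN divff ?lt_eqF // scaleN1r subrr.
  by rewrite slack_upd (proj1 (rowsK_ker K d) Hd k kK) scale0r addr0 HK.
- apply: (rank_ext Hd) => //; by rewrite lt_eqF.
Qed.


Lemma purify_step (y0 : 'cV[R]_n) Y K : feas Y -> col ord0 Y = y0 -> tight Y K ->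
  \rank (rowsK K) = #|K| ->
  (exists d : 'cV[R]_n, rowsK K *m d = 0 /\ exists i, (A *m y0) i 0 = b i 0 /\ (A *m d) i 0 != 0) ->
  exists Y' i, [/\ feas Y', col ord0 Y' = y0, tight Y' (i |: K),
                   \rank (rowsK (i |: K)) = #|i |: K| & i \notin K].
Proof.
move=> HY Hc HK Hr [d0 [Hd0 [i0 [Hi0 Hdi0]]]].
have [d [Hd neg]] : exists d : 'cV[R]_n, rowsK K *m d = 0 /\ (A *m d) i0 0 < 0.
  case: (ltgtP ((A *m d0) i0 0) 0) => [lt|gt|eq]; first by exists d0.
    by exists (- d0); rewrite !mulmxN Hd0 oppr0 mxE oppr_lt0.
  by move: Hdi0; rewrite eq eqxx.
have [i [t [Hi iK Ht HY' [HK' Hr' Hmin]]]] := extend HY HK Hr Hd neg.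
exists (Y + d *m t), i; split => //.
have t0 : 0 <= t 0 ord0 := lexnn_first Ht.
have := lexnn_first (Hmin i0 neg).
rewrite mxE [X in 0 <= X + _]mxE [X in _ + X]mxE slack0 Hc.
have -> : (A *m y0) i0 0 - b i0 0 = 0 by rewrite Hi0 subrr.
rewrite mulr0 add0r oppr_ge0 => t0'.
have tz : t ord0 ord0 = 0 by apply/eqP; rewrite eq_le t0' t0.
apply/matrixP => a c; rewrite !mxE big_ord1 tz mulr0 addr0.
by rewrite -Hc mxE.
Qed.

Lemma rowsK0 : rowsK set0 = 0.
Proof. by apply/matrixP => i j; rewrite /rowsK mul_diag_mx !mxE in_set0 mul0r. Qed.

Lemma purify (y0 : 'cV[R]_n) : inP A b y0 -> exists Y K,
  [/\ feas Y, col ord0 Y = y0, tight Y K, \rank (rowsK K) = #|K| &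
   forall d : 'cV[R]_n, rowsK K *m d = 0 -> forall i, (A *m y0) i 0 = b i 0 -> (A *m d) i 0 = 0].
Proof.
move=> Hy.
suff: forall N Y (K : {set 'I_m}), (n - #|K| <= N)%N -> feas Y -> col ord0 Y = y0 -> tight Y K ->
    \rank (rowsK K) = #|K| -> exists Y K,
  [/\ feas Y, col ord0 Y = y0, tight Y K, \rank (rowsK K) = #|K| &
   forall d : 'cV[R]_n, rowsK K *m d = 0 -> forall i, (A *m y0) i 0 = b i 0 -> (A *m d) i 0 = 0].
  move=> /(_ n (row_mx y0 0) set0); apply.
  - by rewrite cards0 subn0.
  - exact: feas_Y0.
  - exact: col_Y0.
  - by move=> k; rewrite in_set0.
  - by rewrite rowsK0 mxrank0 cards0.
elim=> [|N IH] Y K HN HY Hc HK Hr;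
  (case: (classic (exists d : 'cV[R]_n, rowsK K *m d = 0 /\ exists i, (A *m y0) i 0 = b i 0 /\ (A *m d) i 0 != 0)) => [H|H];
   [ | exists Y, K; split => // d Hd i Hi; apply/eqP; apply: contraT => Hne; exfalso; apply: H;
       exists d; split => //; exists i; split => //]).
- have [Y' [i [_ _ _ Hr' iK]]] := purify_step HY Hc HK Hr H.
  have : (#|i |: K| <= n)%N by rewrite -Hr' rank_leq_col.
  by rewrite cardsU1 iK; move: HN; lia.
- have [Y' [i [HY' Hc' HK' Hr' iK]]] := purify_step HY Hc HK Hr H.
  have : (#|i |: K| <= n)%N by rewrite -Hr' rank_leq_col.
  rewrite cardsU1 iK => Hle.
  apply: (IH Y' (i |: K)) => //.
  by rewrite cardsU1 iK; move: HN Hle; lia.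
Qed.

Lemma ker_rank (K : {set 'I_m}) : (forall z : 'cV[R]_n, rowsK K *m z = 0 -> z = 0) -> \rank (rowsK K) = n.
Proof.
move=> H; rewrite -mxrank_tr; apply/eqP.
have : row_free (rowsK K)^T.
  rewrite -kermx_eq0; apply/rowV0P => v /sub_kermxP Hv.
  have := H v^T; rewrite -(trmxK (rowsK K)) -trmx_mul Hv trmx0 => /(_ erefl).
  by move/(congr1 trmx); rewrite trmxK trmx0.
by [].
Qed.

Lemma unit_of_ker (M : 'M[R]_n) : (forall z : 'cV[R]_n, M *m z = 0 -> z = 0) -> M \in unitmx.
Proof.
move=> H; rewrite unitmxE unitfE -det_tr; apply/negP => /det0P [v vn Hv].
have := H v^T; rewrite -(trmxK M) -trmx_mul Hv trmx0 => /(_ erefl).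
by move/(congr1 trmx); rewrite trmxK trmx0 => E; rewrite E eqxx in vn.
Qed.

Lemma AI_row (I : {set 'I_m}) (j : 'I_n) : #|I| = n -> exists2 i0, i0 \in I &
  row j (AI A I) = row i0 A /\ row j (btI n b I) = row i0 (btilde b).
Proof.
move=> HI.
have hj : (j < size (enum I))%N by rewrite -cardE HI.
have [x _] : exists x : 'I_m, true by case E: (enum I) hj => [//|x s] _; exists x.
exists (nth x (enum I) j); first by rewrite -mem_enum mem_nth.
by split; apply/rowP => k; rewrite [LHS]mxE [LHS]mxE (nth_map x) // [RHS]mxE.
Qed.

Lemma AI_row_inv (I : {set 'I_m}) i0 : #|I| = n -> i0 \in I -> exists j : 'I_n,
  row j (AI A I) = row i0 A /\ row j (btI n b I) = row i0 (btilde b).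
Proof.
move=> HI Hi0.
have hj : (index i0 (enum I) < n)%N by rewrite -HI cardE index_mem mem_enum.
exists (Ordinal hj).
have hs : (index i0 (enum I) < size (enum I))%N by rewrite index_mem mem_enum.
by split; apply/rowP => k; rewrite [LHS]mxE [LHS]mxE (nth_map i0) // [RHS]mxE /= nth_index ?mem_enum.
Qed.

Lemma finish Y (K : {set 'I_m}) : feas Y -> tight Y K -> #|K| = n ->
  (forall z : 'cV[R]_n, rowsK K *m z = 0 -> z = 0) -> lex_feasible A b K /\ XI A b K = Y.
Proof.
move=> HY HK Hc Hker.
have HAY : AI A K *m Y = btI n b K.
  apply/row_matrixP => j; rewrite row_mul; have [i0 i0K [E1 E2]] := AI_row j Hc.
  rewrite E1 E2 -row_mul; apply/eqP; rewrite -subr_eq0; apply/eqP; exact: HK.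
have Hu : AI A K \in unitmx.
  apply: unit_of_ker => z Hz; apply: Hker; apply/rowsK_ker => k kK.
  have [j [E1 _]] := AI_row_inv Hc kK.
  have : (row j (AI A K) *m z) 0 0 = 0 by rewrite -row_mul Hz !mxE.
  by rewrite E1 -row_mul [X in X = _]mxE.
have XE : XI A b K = Y by rewrite /XI -HAY mulKmx.
split => //; split => //; split => // i; rewrite XE; apply/lex_leE; exact: HY i.
Qed.

End Poly.



Section Geo.
Variables (R : realFieldType) (m n : nat) (A : 'M[R]_(m, n)) (b : 'cV[R]_m).

Definition cdot (c x : 'cV[R]_n) := (c^T *m x) 0 0.

Lemma cdotD c x y : cdot c (x + y) = cdot c x + cdot c y.
Proof. by rewrite /cdot mulmxDr mxE. Qed.
Lemma cdotZ c a x : cdot c (a *: x) = a * cdot c x.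
Proof. by rewrite /cdot -scalemxAr mxE. Qed.
Lemma cdotN c x : cdot c (- x) = - cdot c x.
Proof. by rewrite /cdot mulmxN mxE. Qed.
Lemma cdotB c x y : cdot c (x - y) = cdot c x - cdot c y.
Proof. by rewrite cdotD cdotN. Qed.

Lemma AmulD (x y : 'cV[R]_n) i : (A *m (x + y)) i 0 = (A *m x) i 0 + (A *m y) i 0.
Proof. by rewrite mulmxDr mxE. Qed.
Lemma AmulZ a (x : 'cV[R]_n) i : (A *m (a *: x)) i 0 = a * (A *m x) i 0.
Proof. by rewrite -scalemxAr mxE. Qed.
Lemma AmulN (x : 'cV[R]_n) i : (A *m (- x)) i 0 = - (A *m x) i 0.
Proof. by rewrite mulmxN mxE. Qed.
Lemma AmulB (x y : 'cV[R]_n) i : (A *m (x - y)) i 0 = (A *m x) i 0 - (A *m y) i 0.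
Proof. by rewrite AmulD AmulN. Qed.

Lemma fin_pos (P : pred 'I_m) (f : 'I_m -> R) :
  (forall i, P i -> 0 < f i) -> exists2 s, 0 < s & forall i, P i -> s <= f i.
Proof.
move=> H.
suff: forall s : seq 'I_m, exists2 e, 0 < e & forall i, i \in s -> P i -> e <= f i.
  by move=> /(_ (enum 'I_m)) [e he He]; exists e => // i; apply: He; rewrite mem_enum.
elim=> [|x s [e he He]]; first by exists 1.
case: (boolP (P x)) => Px.
- exists (Num.min e (f x)); first by rewrite lt_min he H.
  move=> i; rewrite inE => /orP[/eqP->|/He Hi] Pi; rewrite ge_min.
    by rewrite lexx orbT.
  by rewrite Hi.
- exists e => // i; rewrite inE => /orP[/eqP->|/He //]; by rewrite (negbTE Px).
Qed.

Lemma small_step (y0 d : 'cV[R]_n) : inP A b y0 ->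
  (forall i, (A *m y0) i 0 = b i 0 -> (A *m d) i 0 = 0) ->
  exists2 s, 0 < s & inP A b (y0 + s *: d) /\ inP A b (y0 - s *: d).
Proof.
move=> Hy Hd.
have Hpos : forall i, (fun i => (A *m y0) i 0 != b i 0) i ->
    0 < (fun i => ((A *m y0) i 0 - b i 0) / (`|(A *m d) i 0| + 1)) i.
  move=> i /= Hi; apply: divr_gt0; last by rewrite ltr_wpDl.
  by rewrite subr_gt0 lt_neqAle eq_sym Hi Hy.
have [s hs Hs] := fin_pos Hpos.
exists s => //.
have key : forall i, s * `|(A *m d) i 0| <= (A *m y0) i 0 - b i 0.
  move=> i; case: (boolP ((A *m y0) i 0 == b i 0)) => [/eqP E|NE].
    by rewrite (Hd i E) normr0 mulr0 E subrr.
  have := Hs i NE; rewrite ler_pdivlMr ?ltr_wpDl // => H.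
  apply: le_trans H; rewrite ler_pM2l // lerDl //.
split => i.
- rewrite (AmulD y0 (s *: d)) AmulZ; have := key i; have := ler_normr ((A *m d) i 0).
  move=> _ H1; have H3 : s * (- (A *m d) i 0) <= s * `|(A *m d) i 0|.
    by rewrite ler_pM2l // -normrN ler_norm.
  lra.
- rewrite (AmulB y0 (s *: d)) AmulZ; have := key i.
  move=> H1; have H3 : s * ((A *m d) i 0) <= s * `|(A *m d) i 0|.
    by rewrite ler_pM2l // ler_norm.
  lra.
Qed.


Lemma min_dir (c y0 d : 'cV[R]_n) s : minimizer A b c y0 -> 0 < s ->
  inP A b (y0 + s *: d) -> inP A b (y0 - s *: d) ->
  cdot c d = 0 /\ minimizer A b c (y0 + s *: d).
Proof.
move=> [Hy Hmin] hs H1 H2.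
have E1 : cdot c y0 <= cdot c (y0 + s *: d) := Hmin _ H1.
have E2 : cdot c y0 <= cdot c (y0 - s *: d) := Hmin _ H2.
rewrite cdotD cdotZ in E1; rewrite cdotB cdotZ in E2.
have H : s * cdot c d = 0 by lra.
have cd : cdot c d = 0 by move/eqP: H; rewrite mulf_eq0 (gt_eqF hs) /= => /eqP.
split => //; split => // y Hy'.
change (cdot c (y0 + s *: d) <= cdot c y).
rewrite cdotD cdotZ cd mulr0 addr0; exact: Hmin.
Qed.

Lemma segE (v w : 'cV[R]_n) t : (1 - t) *: v + t *: w = v + t *: (w - v).
Proof. by rewrite scalerBl scale1r scalerBr addrAC addrA. Qed.

Definition cK (K : {set 'I_m}) : 'cV[R]_n := (rowsK A K)^T *m const_mx 1.

Lemma cdot_cK K y : cdot (cK K) y = \sum_i (i \in K)%:R * (A *m y) i 0.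
Proof.
rewrite /cdot /cK trmx_mul trmxK -mulmxA mxE; apply: eq_bigr => i _.
by rewrite rowsK_mulE !mxE mul1r.
Qed.

Lemma face_tight (K : {set 'I_m}) x : inP A b x -> (forall k, k \in K -> (A *m x) k 0 = b k 0) ->
  forall y, minimizer A b (cK K) y <-> inP A b y /\ forall k, k \in K -> (A *m y) k 0 = b k 0.
Proof.
move=> Hx Htx.
pose g (y : 'cV[R]_n) (i : 'I_m) := (i \in K)%:R * ((A *m y) i 0 - b i 0).
have diff : forall y, cdot (cK K) y - cdot (cK K) x = \sum_i g y i.
  move=> y; rewrite !cdot_cK -sumrB; apply: eq_bigr => i _; rewrite /g.
  case: (boolP (i \in K)) => iK; last by rewrite !mul0r subrr.
  by rewrite !mul1r Htx.
have gnn : forall y, inP A b y -> forall i, 0 <= g y i.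
  move=> y Hy i; rewrite /g; case: (i \in K); rewrite ?mul1r ?mul0r // subr_ge0; exact: Hy.
move=> y; split.
- move=> [Hy Hmin]; split => // k kK.
  have le0 : \sum_i g y i <= 0 by rewrite -diff subr_le0; exact: Hmin.
  have ge0 : 0 <= \sum_i g y i by apply: sumr_ge0 => i _; exact: gnn.
  have S0 : \sum_i g y i = 0 by apply/eqP; rewrite eq_le le0 ge0.
  have := @psumr_eq0P _ _ (fun _ => true) (g y) (fun i _ => gnn y Hy i) S0 k isT.
  by rewrite /g kK mul1r => /eqP; rewrite subr_eq0 => /eqP.
- move=> [Hy Ht]; split => // z Hz.
  have S0 : \sum_i g y i = 0.
    apply: big1 => i _; rewrite /g; case: (boolP (i \in K)) => iK; last by rewrite mul0r.
    by rewrite Ht // subrr mulr0.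
  have ge0 : 0 <= \sum_i g z i by apply: sumr_ge0 => i _; exact: gnn.
  change (cdot (cK K) y <= cdot (cK K) z).
  have := diff y; have := diff z; rewrite S0; lra.
Qed.

Lemma rowmulE p (M : 'M[R]_(p, n)) (z : 'cV[R]_n) j : (M *m z) j 0 = (row j M *m z) 0 0.
Proof. by rewrite -row_mul [RHS]mxE. Qed.

Lemma colmulE p q (M : 'M[R]_(p, n)) (X : 'M[R]_(n, q)) k j : (M *m col k X) j 0 = (M *m X) j k.
Proof. by rewrite !mxE; apply: eq_bigr => l _; rewrite !mxE. Qed.

Lemma ker_AI (I : {set 'I_m}) (z : 'cV[R]_n) : #|I| = n -> AI A I \in unitmx ->
  (forall k, k \in I -> (A *m z) k 0 = 0) -> z = 0.
Proof.
move=> HI Hu Hz.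
have E : AI A I *m z = 0.
  apply/matrixP => j c; rewrite (ord1 c) [RHS]mxE.
  have [i0 i0I [E1 _]] := AI_row A b j HI.
  by rewrite rowmulE E1 -rowmulE; apply: Hz.
by rewrite -(mulKmx Hu z) E mulmx0.
Qed.

Lemma lexf_tight I : lex_feasible A b I -> forall k, k \in I -> (A *m phi A b I) k 0 = b k 0.
Proof.
move=> [HI [Hu _]] k kI.
have HX : AI A I *m XI A b I = btI n b I by rewrite /XI mulKVmx.
have [j [E1 E2]] := AI_row_inv A b HI kI.
rewrite /phi rowmulE -E1 -rowmulE colmulE HX.
have := congr1 (fun M : 'rV[R]_(m.+1) => M 0 ord0) E2; rewrite /= !mxE => ->.
by case: splitP => [j1 _|k2 /= Hk] //; rewrite (ord1 j1).
Qed.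

Lemma lexf_inP I : lex_feasible A b I -> inP A b (phi A b I).
Proof.
move=> [_ [_ H]] i; have := H i; move/lex_leE/lexnn_first.
by rewrite -/(slack A b _ i) slack0 subr_ge0.
Qed.

Lemma lexf_vertex I : lex_feasible A b I -> is_vertex A b (phi A b I).
Proof.
move=> HI; split; first by exists (phi A b I).
have Hx := lexf_inP HI; have Ht := lexf_tight HI.
exists (cK I) => z; split.
- by move=> ->; apply/(face_tight Hx Ht).
- move/(face_tight Hx Ht) => [Hz Htz].
  case: HI => [HI [Hu _]].
  apply/eqP; rewrite -subr_eq0; apply/eqP; apply: (ker_AI HI Hu) => k kI.
  by rewrite AmulB Htz // Ht // subrr.
Qed.

End Geo.



Section Main.
Variables (R : realFieldType) (m n : nat) (A : 'M[R]_(m, n)) (b : 'cV[R]_m).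

Lemma vertex_inP v : is_vertex A b v -> inP A b v.
Proof. by move=> [_ [c Hc]]; have [] := (proj1 (Hc v) erefl). Qed.

Lemma scale_cancel (u : 'cV[R]_n) a c : u != 0 -> a *: u = c *: u -> a = c.
Proof.
move=> un /eqP; rewrite -subr_eq0 -scalerBl scaler_eq0 (negbTE un) orbF subr_eq0.
by move/eqP.
Qed.

Lemma vertex_lexf v : is_vertex A b v -> exists I, lex_feasible A b I /\ phi A b I = v.
Proof.
move=> Hvx; have [_ [c Hc]] := Hvx.
have Hmv : minimizer A b c v by apply/Hc.
have Hv : inP A b v := Hmv.1.
have [Y [K [HY Hcol HK Hr Hker]]] := purify Hv.
have ker0 : forall z : 'cV[R]_n, rowsK A K *m z = 0 -> z = 0.
  move=> z Hz; have HS := Hker z Hz.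
  have [s hs [H1 H2]] := small_step Hv HS.
  have [_ Hm'] := min_dir Hmv hs H1 H2.
  have : v + s *: z = v by apply/Hc.
  move/eqP; rewrite -subr_eq0 addrAC subrr add0r scaler_eq0 (gt_eqF hs) /=.
  by move/eqP.
have Hc' : #|K| = n by rewrite -Hr ker_rank.
have [Hlf XE] := finish HY HK Hc' ker0.
by exists K; split => //; rewrite /phi XE Hcol.
Qed.

Lemma bounded_dir (y d : 'cV[R]_n) : polytope A b -> inP A b y -> d != 0 ->
  exists i, (A *m d) i 0 < 0.
Proof.
move=> [M HM] Hy dn.
case: (classic (exists i, (A *m d) i 0 < 0)) => // H; exfalso.
have Hge : forall i, 0 <= (A *m d) i 0.
  by move=> i; rewrite leNgt; apply/negP => lt; apply: H; exists i.
have [j dj] : exists j, d j 0 != 0.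
  case: (classic (exists j, d j 0 != 0)) => // H'; exfalso.
  move/negP: dn; apply; apply/eqP/matrixP => j k; rewrite (ord1 k) mxE.
  by apply/eqP; apply: contraT => Hn; exfalso; apply: H'; exists j.
have M0 : 0 <= M by apply: le_trans (normr_ge0 (y j 0)) (HM y Hy j).
pose t := (M + `|y j 0| + 1) / `|d j 0|.
have dpos : 0 < `|d j 0| by rewrite normr_gt0.
have t0 : 0 <= t by rewrite /t divr_ge0 // addr_ge0 // addr_ge0.
have Hin : inP A b (y + t *: d).
  move=> i; rewrite AmulD AmulZ; have := Hy i; have := Hge i.
  move=> H1 H2; have : 0 <= t * (A *m d) i 0 by rewrite mulr_ge0.
  lra.
have := HM _ Hin j; rewrite !mxE.
have td : `|t * d j 0| = M + `|y j 0| + 1.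
  by rewrite normrM (ger0_norm t0) /t divfK // gt_eqF.
have := ler_normB (y j 0 + t * d j 0) (y j 0).
rewrite addrAC subrr add0r td; lra.
Qed.

Lemma vertex_not_interior (v w x : 'cV[R]_n) t : is_vertex A b x -> inP A b v -> inP A b w ->
  v != w -> 0 < t -> t < 1 -> x = v + t *: (w - v) -> False.
Proof.
move=> [_ [c Hc]] Hv Hw vw t0 t1 Ex.
have Hm : minimizer A b c x by apply/Hc.
have Ev : cdot c x <= cdot c v := Hm.2 v Hv.
have Ew : cdot c x <= cdot c w := Hm.2 w Hw.
have Ecx : cdot c x = cdot c v + t * (cdot c w - cdot c v) by rewrite Ex cdotD cdotZ cdotB.
have Eq : cdot c v = cdot c x.
  have a0 : 0 <= cdot c v - cdot c x by rewrite subr_ge0.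
  have b0 : 0 <= cdot c w - cdot c x by rewrite subr_ge0.
  have : cdot c v - cdot c x + t * ((cdot c w - cdot c x) - (cdot c v - cdot c x)) = 0.
    rewrite Ecx; ring.
  move=> E; suff : cdot c v - cdot c x = 0 by move/eqP; rewrite subr_eq0 => /eqP.
  nra.
have Hmv : minimizer A b c v.
  split => // y Hy; change (cdot c v <= cdot c y); rewrite Eq; exact: Hm.2.
have := proj2 (Hc v) Hmv; rewrite Ex => /eqP; rewrite eq_sym -subr_eq0 addrAC subrr add0r.
rewrite scaler_eq0 (gt_eqF t0) /= subr_eq0 => /eqP E.
by move: vw; rewrite E eqxx.
Qed.

Lemma col0_upd (Y : 'M[R]_(n, m.+1)) (d : 'cV[R]_n) (t : 'rV[R]_(m.+1)) :
  col ord0 (Y + d *m t) = col ord0 Y + t ord0 ord0 *: d.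
Proof. by apply/matrixP => i j; rewrite !mxE big_ord1 (ord1 j) mulrC. Qed.


Lemma get_i (I I' : {set 'I_m}) : #|I| = n -> #|I :&: I'| = n.-1 -> (0 < n)%N ->
  exists i, i \in I /\ forall k, k \in I -> k \in I :&: I' \/ k = i.
Proof.
move=> HI HK n0.
have : #|I :\: (I :&: I')| == 1%N by rewrite cardsD setIA setIid HK HI; apply/eqP; lia.
case/cards1P => i Hi.
have iI : i \in I :\: (I :&: I') by rewrite Hi set11.
exists i; split; first by move: iI; rewrite in_setD => /andP[].
move=> k kI; case: (boolP (k \in I :&: I')) => kK; first by left.
by right; apply/set1P; rewrite -Hi in_setD kK kI.
Qed.

Lemma side (I K : {set 'I_m}) i (w y : 'cV[R]_n) : lex_feasible A b I -> i \in I ->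
  (forall k, k \in I -> k \in K \/ k = i) -> K \subset I ->
  inP A b w -> (forall k, k \in K -> (A *m w) k 0 = b k 0) -> w != phi A b I ->
  inP A b y -> (forall k, k \in K -> (A *m y) k 0 = b k 0) ->
  exists2 la, 0 <= la & y = phi A b I + la *: (w - phi A b I).
Proof.
move=> HI iI Hsplit KI Hw HwK wx Hy HyK.
set x := phi A b I; set u := w - x.
have Hx := lexf_tight HI.
have [HIc [Hu _]] := HI.
have HuK : forall k, k \in K -> (A *m u) k 0 = 0.
  by move=> k kK; rewrite AmulB HwK // Hx ?(subsetP KI) // subrr.
have ui : (A *m u) i 0 != 0.
  apply/negP => /eqP ui; move/negP: wx; apply; rewrite -subr_eq0; apply/eqP.
  apply: (ker_AI b HIc Hu) => k kI; case: (Hsplit k kI) => [kK|->]; [exact: HuK | exact: ui].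
have upos : 0 < (A *m u) i 0.
  rewrite lt_neqAle eq_sym ui /= AmulB Hx // subr_ge0; exact: Hw.
pose la := (A *m (y - x)) i 0 / (A *m u) i 0.
exists la.
  by rewrite /la divr_ge0 ?(ltW upos) // AmulB Hx // subr_ge0; exact: Hy.
have : y - x - la *: u = 0.
  apply: (ker_AI b HIc Hu) => k kI; rewrite AmulB AmulZ.
  case: (Hsplit k kI) => [kK|->].
    by rewrite HuK // mulr0 subr0 AmulB HyK // Hx ?(subsetP KI) // subrr.
  by rewrite /la divfK // subrr.
by move/eqP; rewrite subr_eq0 => /eqP <-; rewrite addrC subrK.
Qed.

Lemma edge_bwd v w (I I' : {set 'I_m}) : lex_edge A b I I' -> phi A b I = v -> phi A b I' = w ->
  v <> w -> vert_adj A b v w.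
Proof.
move=> [HI [HI' HK]] Ev Ew vw.
have n0 : (0 < n)%N.
  case: n A v w vw {Ev Ew HI HI' HK} => [|//] A0 v w vw; exfalso; apply: vw.
  by rewrite (flatmx0 v) (flatmx0 w).
have Hv := lexf_vertex HI; have Hw := lexf_vertex HI'.
rewrite Ev in Hv; rewrite Ew in Hw.
split => //; split => //; split => //.
set K := I :&: I'.
have Htv : forall k, k \in K -> (A *m v) k 0 = b k 0.
  by move=> k; rewrite in_setI => /andP[kI _]; rewrite -Ev lexf_tight.
have Htw : forall k, k \in K -> (A *m w) k 0 = b k 0.
  by move=> k; rewrite in_setI => /andP[_ kI']; rewrite -Ew lexf_tight.
have inv := vertex_inP Hv; have inw := vertex_inP Hw.
split; first by exists v; exists 0; rewrite subr0 scale1r scale0r addr0 lexx ler01.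
exists (cK A K) => y; rewrite (face_tight inv Htv); split.
- move=> [t [t0 [t1 ->]]]; split.
    move=> i; rewrite AmulD !AmulZ; have := inv i; have := inw i => H1 H2.
    have : 0 <= (1 - t) * ((A *m v) i 0 - b i 0) by rewrite mulr_ge0 // subr_ge0.
    have : 0 <= t * ((A *m w) i 0 - b i 0) by rewrite mulr_ge0 // subr_ge0.
    nra.
  by move=> k kK; rewrite AmulD !AmulZ Htv // Htw //; ring.
- move=> [Hy HyK].
  have [i [iI Hi]] := get_i (proj1 HI) HK n0.
  have HK' : #|I' :&: I| = n.-1 by rewrite setIC.
  have [i' [i'I Hi']] := get_i (proj1 HI') HK' n0.
  have Hi'' : forall k, k \in I' -> k \in K \/ k = i' by rewrite /K setIC.
  have KI' : K \subset I' by rewrite /K subsetIr.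
  have vw' : w != phi A b I by rewrite Ev; apply/eqP => E; apply: vw.
  have wv' : v != phi A b I' by rewrite Ew; apply/eqP.
  have [la la0 E1] := side HI iI Hi (subsetIl _ _) inw Htw vw' Hy HyK.
  have [mu mu0 E2] := side HI' i'I Hi'' KI' inv Htv wv' Hy HyK.
  rewrite Ev in E1; rewrite Ew in E2.
  have un : w - v != 0 by rewrite subr_eq0; apply/eqP => E; apply: vw.
  have : la = 1 - mu.
    apply: (scale_cancel un).
    have h1 : la *: (w - v) = y - v by rewrite E1 (addrC v) addrK.
    have vz : v - w = - (w - v) by rewrite opprB.
    rewrite h1 E2 vz scalerN scalerBl scale1r.
    set q := mu *: (w - v); by rewrite addrAC.
  move=> Ela; exists la; split => //; split; first by rewrite Ela; lra.
  by rewrite E1 segE.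
Qed.


Lemma edge_fwd v w : polytope A b -> vert_adj A b v w ->
  exists I I', lex_edge A b I I' /\ phi A b I = v /\ phi A b I' = w /\ v <> w.
Proof.
move=> Hpoly [Hv [Hw [vw [_ [c Hc]]]]].
have inv := vertex_inP Hv; have inw := vertex_inP Hw.
pose u := w - v; pose h : R := 2^-1.
have un : u != 0 by rewrite subr_eq0; apply/eqP => E; apply: vw.
have segP : forall x, segment v w x <-> exists t, [/\ 0 <= t, t <= 1 & x = v + t *: u].
  move=> x; split.
    by move=> [t [t0 [t1 ->]]]; exists t; split => //; rewrite segE.
  by move=> [t [t0 t1 ->]]; exists t; split => //; split => //; rewrite segE.
pose y0 := v + h *: u.
have Hy0min : minimizer A b c y0 by apply/Hc/segP; exists h; split => //; rewrite /h; lra.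
have Hy0 : inP A b y0 := Hy0min.1.
have HSu : forall i, (A *m y0) i 0 = b i 0 -> (A *m u) i 0 = 0.
  move=> i; rewrite /y0 AmulD AmulZ /u AmulB /h; have := inv i; have := inw i; lra.
have Hvmin : minimizer A b c v by apply/Hc/segP; exists 0; rewrite scale0r addr0 lexx ler01.
have Hwmin : minimizer A b c w.
  by apply/Hc/segP; exists 1; rewrite scale1r /u addrC subrK lexx ler01.
have cu : cdot c u = 0.
  have := Hvmin.2 w inw; have := Hwmin.2 v inv.
  change (cdot c w <= cdot c v -> cdot c v <= cdot c w -> cdot c u = 0).
  by rewrite /u cdotB; lra.
have Hkerline : forall d : 'cV[R]_n, (forall i, (A *m y0) i 0 = b i 0 -> (A *m d) i 0 = 0) ->
    exists la, d = la *: u.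
  move=> d Hd; have [s hs [H1 H2]] := small_step Hy0 Hd.
  have [_ Hm] := min_dir Hy0min hs H1 H2.
  have [t [t0 t1 E]] := proj1 (segP _) (proj2 (Hc _) Hm).
  exists (s^-1 * (t - h)); apply: (@scalerI _ _ s); first by rewrite gt_eqF.
  have E' : s *: d = (v + t *: u) - y0 by rewrite -E (addrC y0) addrK.
  rewrite scalerA mulrA divff ?gt_eqF // mul1r scalerBl E' /y0.
  by rewrite opprD addrACA subrr add0r.
have endp : forall tau, is_vertex A b (v + tau *: u) -> tau = 0 \/ tau = 1.
  move=> tau Hx; have inx := vertex_inP Hx.
  have Hm : minimizer A b c (v + tau *: u).
    split => // y Hy; change (cdot c (v + tau *: u) <= cdot c y).
    by rewrite cdotD cdotZ cu mulr0 addr0; exact: Hvmin.2.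
  have [t [t0 t1 E]] := proj1 (segP _) (proj2 (Hc _) Hm).
  have Et : tau = t by apply: (scale_cancel un); apply: (addrI v).
  subst t.
  case: (ltgtP tau 0) => [lt|gt|->]; [by move: t0; rewrite leNgt lt | | by left].
  case: (ltgtP tau 1) => [lt1|gt1|->]; [ | by move: t1; rewrite leNgt gt1 | by right].
  exfalso; apply: (vertex_not_interior Hx inv inw _ gt lt1) => //.
  by apply/eqP => E'; apply: vw.
have [Y [K [HY Hcol HK Hr Hker]]] := purify Hy0.
have HKS : forall k, k \in K -> (A *m y0) k 0 = b k 0.
  move=> k kK; have := congr1 (fun M : 'rV[R]_(m.+1) => M 0 ord0) (HK k kK).
  rewrite /= slack0 Hcol [RHS]mxE => /eqP; rewrite subr_eq0 => /eqP //.
have HuK : rowsK A K *m u = 0 by apply/rowsK_ker => k kK; apply: HSu; apply: HKS.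
have HuK' : rowsK A K *m (- u) = 0 by rewrite mulmxN HuK oppr0.
have sideF : forall (d : 'cV[R]_n) (j : 'I_m) (t : 'rV[R]_(m.+1)), rowsK A K *m d = 0 ->
    (d = u \/ d = - u) -> (A *m d) j 0 < 0 -> j \notin K -> lexnn t ->
    feas A b (Y + d *m t) -> tight A b (Y + d *m t) (j |: K) ->
    \rank (rowsK A (j |: K)) = #|j |: K| ->
    lex_feasible A b (j |: K) /\ phi A b (j |: K) = y0 + t ord0 ord0 *: d /\ #|j |: K| = n.
  move=> d j t Hd Hdu Hj jK Ht HY1 HK1 Hr1.
  have uj : (A *m u) j 0 != 0.
    case: Hdu Hj => -> H; first by rewrite lt_eqF.
    by move: H; rewrite AmulN oppr_lt0 => H; rewrite gt_eqF.
  have ker0 : forall z : 'cV[R]_n, rowsK A (j |: K) *m z = 0 -> z = 0.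
    move=> z /rowsK_ker Hz.
    have HzK : rowsK A K *m z = 0.
      by apply/rowsK_ker => k kK; apply: Hz; rewrite in_setU1 kK orbT.
    have [la Ela] := Hkerline z (Hker z HzK).
    have : (A *m z) j 0 = 0 by apply: Hz; rewrite setU11.
    rewrite Ela AmulZ => /eqP; rewrite mulf_eq0 (negbTE uj) orbF => /eqP ->.
    by rewrite scale0r.
  have Hn : #|j |: K| = n by rewrite -Hr1 ker_rank.
  have [Hlf XE] := finish HY1 HK1 Hn ker0.
  by split => //; split => //; rewrite /phi XE col0_upd Hcol.
have [i1 neg1] := bounded_dir Hpoly Hy0 un.
have nu : - u != 0 by rewrite oppr_eq0.
have [i2 neg2] := bounded_dir Hpoly Hy0 nu.
have [j1 [t1 [Hj1 j1K Ht1 HY1 [HK1 Hr1 _]]]] := extend HY HK Hr HuK neg1.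
have [j2 [t2 [Hj2 j2K Ht2 HY2 [HK2 Hr2 _]]]] := extend HY HK Hr HuK' neg2.
have [Hf1 [Ep1 Hn1]] := sideF _ _ _ HuK (or_introl erefl) Hj1 j1K Ht1 HY1 HK1 Hr1.
have [Hf2 [Ep2 Hn2]] := sideF _ _ _ HuK' (or_intror erefl) Hj2 j2K Ht2 HY2 HK2 Hr2.
have t10 := lexnn_first Ht1; have t20 := lexnn_first Ht2.
have Ev1 : phi A b (j1 |: K) = v + (h + t1 ord0 ord0) *: u.
  by rewrite Ep1 /y0 scalerDl addrA.
have Ev2 : phi A b (j2 |: K) = v + (h - t2 ord0 ord0) *: u.
  by rewrite Ep2 /y0 scalerBl addrA scalerN.
have V1 := lexf_vertex Hf1; have V2 := lexf_vertex Hf2.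
rewrite Ev1 in V1; rewrite Ev2 in V2.
have a10 : 0 <= t1 ord0 ord0 := t10.
have a20 : 0 <= t2 ord0 ord0 := t20.
have P1 : phi A b (j1 |: K) = w.
  case: (endp _ V1) => E; first by exfalso; move: E a10; rewrite /h; lra.
  by rewrite Ev1 E scale1r /u addrC subrK.
have P2 : phi A b (j2 |: K) = v.
  case: (endp _ V2) => E; last by exfalso; move: E a20; rewrite /h; lra.
  by rewrite Ev2 E scale0r addr0.
exists (j2 |: K), (j1 |: K); split; last by [].
split => //; split => //.
have j12 : j1 != j2.
  apply/eqP => E; move: Hj2; rewrite -E AmulN oppr_lt0 => H; move: (lt_trans H Hj1).
  by rewrite ltxx.
have -> : (j2 |: K) :&: (j1 |: K) = K.
  apply/setP => x; rewrite !inE.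
  case: (boolP (x \in K)) => xK; rewrite ?orbT ?orbF //=.
  apply/negP => /andP[/eqP E1 /eqP E2]; move: j12; rewrite -E1 -E2 eqxx //.
by move: Hn1; rewrite cardsU1 j1K add1n => <-.
Qed.

End Main.


Theorem theorem3p8 (R : realFieldType) (m n : nat)
    (A : 'M[R]_(m, n)) (b : 'cV[R]_m) :
  polytope A b ->
  (forall v : 'cV[R]_n,
     is_vertex A b v <-> exists I : {set 'I_m}, lex_feasible A b I /\ phi A b I = v) /\
  (forall v w : 'cV[R]_n,
     vert_adj A b v w <->
     exists I I' : {set 'I_m},
       lex_edge A b I I' /\ phi A b I = v /\ phi A b I' = w /\ v <> w).
Proof.
move=> Hpoly; split.
- move=> v; split; first exact: vertex_lexf.
  by move=> [I [HI <-]]; exact: lexf_vertex.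
- move=> v w; split; first exact: edge_fwd.
  by move=> [I [I' [He [Ev [Ew vw]]]]]; exact: (edge_bwd He Ev Ew vw).
Qed.
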